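(* Let $K\ge2$, $\theta>1$, $T>0$, and let $\xi_1,\dots,\xi_K$ be $C^1$ real functions on $[T,\infty)$ satisfying, for all $t\ge T$, $$\dot\xi_1=-t^{-1}\gamma_1\big(e^{-(\xi_2-\xi_1)}-1\big)+O(t^{-\theta}),$$ $$\dot\xi_k=t^{-1}\Big(\gamma_{k-1}\big(e^{-(\xi_k-\xi_{k-1})}-1\big)-\gamma_k\big(e^{-(\xi_{k+1}-\xi_k)}-1\big)\Big)+O(t^{-\theta}),\quad 2\le k\le K-1,$$ $$\dot\xi_K=t^{-1}\gamma_{K-1}\big(e^{-(\xi_K-\xi_{K-1})}-1\big)+O(t^{-\theta}),$$ where $\gamma_k=\frac{k(K-k)}{2}$ and each $O(t^{-\theta})$ is bounded in absolute value by $Ct^{-\theta}$ for a fixed $C$. Assume moreover that $\sup_{t\ge T}|\sum_{k=1}^K\xi_k(t)|<\infty$. Then there exists $M>0$ with $|\xi_k(t)|\le M$ for all $k=1,\dots,K$ and all $t\ge T$. *)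

(* Defs.v *)
From Stdlib Require Import Reals Lra.
Open Scope R_scope.

Definition has_deriv_within (T : R) (f : R -> R) (t l : R) : Prop :=
  forall eps : R, 0 < eps -> exists delta : R, 0 < delta /\
    forall s : R, T <= s -> s <> t -> Rabs (s - t) < delta ->
      Rabs ((f s - f t) / (s - t) - l) < eps.

Definition continuous_within (T : R) (g : R -> R) (t : R) : Prop :=
  forall eps : R, 0 < eps -> exists delta : R, 0 < delta /\
    forall s : R, T <= s -> Rabs (s - t) < delta -> Rabs (g s - g t) < eps.

Definition C1_on (T : R) (f f' : R -> R) : Prop :=
  forall t : R, T <= t -> has_deriv_within T f t (f' t) /\ continuous_within T f' t.

Definition gam (K k : nat) : R := INR k * (INR K - INR k) / 2.

(* Main.v *)
Require Import Defs.
From Stdlib Require Import Reals Lra Lia.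
From Coquelicot Require Import Coquelicot.
Open Scope R_scope.

Lemma myDplus f g x a b : derivable_pt_lim f x a -> derivable_pt_lim g x b ->
  derivable_pt_lim (fun s => f s + g s) x (a + b).
Proof. intros; exact (derivable_pt_lim_plus f g x a b H H0). Qed.
Lemma myDminus f g x a b : derivable_pt_lim f x a -> derivable_pt_lim g x b ->
  derivable_pt_lim (fun s => f s - g s) x (a - b).
Proof. intros; exact (derivable_pt_lim_minus f g x a b H H0). Qed.
Lemma myDscal c f x a : derivable_pt_lim f x a ->
  derivable_pt_lim (fun s => c * f s) x (c * a).
Proof. intros; exact (derivable_pt_lim_scal f c x a H). Qed.
Lemma myDexpo f x a : derivable_pt_lim f x a ->
  derivable_pt_lim (fun s => exp (- f s)) x (- exp (- f x) * a).
Proof. intros.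
  assert (H1 : derivable_pt_lim (fun s => - f s) x (- a)).
  { exact (derivable_pt_lim_opp f x a H). }
  replace (- exp (- f x) * a) with (exp (- f x) * - a) by ring.
  exact (derivable_pt_lim_comp (fun s => - f s) exp x (-a) (exp (- f x)) H1 (derivable_pt_lim_exp _)).
Qed.
Lemma myDsum (F : nat -> R -> R) (l : nat -> R) x n :
  (forall i, (i <= n)%nat -> derivable_pt_lim (F i) x (l i)) ->
  derivable_pt_lim (fun s => sum_f_R0 (fun i => F i s) n) x (sum_f_R0 l n).
Proof.
  induction n; intros H; simpl.
  - apply H; lia.
  - apply myDplus; [apply IHn; intros; apply H; lia | apply H; lia].
Qed.

Lemma myCplus f g x : continuity_pt f x -> continuity_pt g x -> continuity_pt (fun s => f s + g s) x.
Proof. intros; exact (continuity_pt_plus f g x H H0). Qed.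
Lemma myCminus f g x : continuity_pt f x -> continuity_pt g x -> continuity_pt (fun s => f s - g s) x.
Proof. intros; exact (continuity_pt_minus f g x H H0). Qed.
Lemma myCscal c f x : continuity_pt f x -> continuity_pt (fun s => c * f s) x.
Proof. intros; exact (continuity_pt_scal f c x H). Qed.
Lemma myCexpo f x : continuity_pt f x -> continuity_pt (fun s => exp (- f s)) x.
Proof. intros.
  assert (H1 : continuity_pt (fun s => - f s) x) by exact (continuity_pt_opp f x H).
  exact (continuity_pt_comp (fun s => - f s) exp x H1 (derivable_continuous_pt _ _ (derivable_pt_exp _))).
Qed.
Lemma myCsum (F : nat -> R -> R) x n :
  (forall i, (i <= n)%nat -> continuity_pt (F i) x) ->
  continuity_pt (fun s => sum_f_R0 (fun i => F i s) n) x.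
Proof.
  induction n; intros H; simpl.
  - apply H; lia.
  - apply myCplus; [apply IHn; intros; apply H; lia | apply H; lia].
Qed.

Lemma deriv_interior T f t l : T < t -> has_deriv_within T f t l ->
  derivable_pt_lim (fun s => f (Rmax T s)) t l.
Proof.
  intros Ht H eps Heps. destruct (H eps Heps) as [d [Hd Hd']].
  assert (Hp : 0 < Rmin d (t - T)) by (apply Rmin_glb_lt; lra).
  exists (mkposreal _ Hp). intros h Hh Hhd. simpl in Hhd.
  pose proof (Rmin_l d (t-T)); pose proof (Rmin_r d (t-T)).
  assert (Hh2 : Rabs h < t - T) by lra.
  pose proof (Rabs_le_between' h 0 (Rabs h)) as _.
  assert (-(t-T) < h) by (pose proof (Rle_abs (-h)); rewrite Rabs_Ropp in *; lra).
  rewrite (Rmax_right T (t+h)) by lra. rewrite (Rmax_right T t) by lra.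
  specialize (Hd' (t+h) ltac:(lra) ltac:(lra)).
  replace (t + h - t) with h in Hd' by ring. apply Hd'. lra.
Qed.

Lemma cont_ext T f t l : T <= t -> has_deriv_within T f t l ->
  continuity_pt (fun s => f (Rmax T s)) t.
Proof.
  intros Ht H. unfold continuity_pt, continue_in, limit1_in, limit_in. simpl. unfold R_dist.
  intros eps Heps. destruct (H 1 Rlt_0_1) as [d [Hd Hd']].
  assert (Hp : 0 < Rmin d (eps / (Rabs l + 1))).
  { apply Rmin_glb_lt; [lra|]. apply Rdiv_lt_0_compat; [lra|]. pose proof (Rabs_pos l); lra. }
  exists (Rmin d (eps / (Rabs l + 1))). split; [exact Hp|].
  intros s [_ Hs]. rewrite (Rmax_right T t) by lra.
  pose proof (Rmin_l d (eps / (Rabs l + 1))); pose proof (Rmin_r d (eps / (Rabs l + 1))).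
  set (s' := Rmax T s).
  assert (Hs' : Rabs (s' - t) <= Rabs (s - t)).
  { unfold s', Rmax. destruct (Rle_dec T s).
    - lra.
    - split_Rabs; lra. }
  assert (HT : T <= s') by (unfold s'; apply Rmax_l).
  destruct (Req_dec s' t) as [E|E].
  - rewrite E. unfold Rminus; rewrite Rplus_opp_r, Rabs_R0. lra.
  - specialize (Hd' s' HT E ltac:(lra)).
    assert (Hnz : s' - t <> 0) by lra.
    replace (f s' - f t) with ((f s' - f t) / (s' - t) * (s' - t)) by (field; exact Hnz).
    rewrite Rabs_mult.
    assert (Rabs ((f s' - f t) / (s' - t)) <= Rabs l + 1).
    { pose proof (Rabs_triang ((f s' - f t) / (s' - t) - l) l).
      replace ((f s' - f t) / (s' - t) - l + l) with ((f s' - f t) / (s' - t)) in H2 by ring. lra. }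
    assert (Hlt : Rabs (s' - t) < eps / (Rabs l + 1)) by lra.
    pose proof (Rabs_pos l). pose proof (Rabs_pos ((f s' - f t) / (s' - t))).
    pose proof (Rabs_pos (s' - t)).
    assert (Rabs (s' - t) * (Rabs l + 1) < eps).
    { apply (Rmult_lt_compat_r (Rabs l + 1)) in Hlt; [|lra].
      replace (eps / (Rabs l + 1) * (Rabs l + 1)) with eps in Hlt by (field; lra). lra. }
    nra.
Qed.

Lemma sbp (a G : nat -> R) n :
  sum_f_R0 (fun i => a (S i) * (G i - G (S i))) (S n) =
  a 1%nat * G 0%nat - a (S (S n)) * G (S (S n)) +
  sum_f_R0 (fun i => G (S i) * (a (S (S i)) - a (S i))) n.
Proof.
  induction n.
  - simpl. ring.
  - rewrite tech5. rewrite IHn. simpl. ring.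
Qed.

Lemma term_bound a g x c : 0 < x -> Rabs (a + g / x) <= c -> a * g <= c * c * x / 4.
Proof.
  intros Hx H. remember (a + g / x) as e eqn:He0.
  assert (Ha : a = e - g / x) by (rewrite He0; ring). rewrite Ha.
  assert (He : e * g <= c * Rabs g).
  { pose proof (Rle_abs (e*g)). rewrite Rabs_mult in H0. pose proof (Rabs_pos g).
    apply Rle_trans with (Rabs e * Rabs g). lra. apply Rmult_le_compat_r; lra. }
  assert (Hq : 0 <= (Rabs g - c * x / 2) * (Rabs g - c * x / 2)) by (pose proof (Rle_0_sqr (Rabs g - c * x / 2)); unfold Rsqr in *; lra).
  assert (Hg2 : Rabs g * Rabs g = g * g).
  { rewrite <- Rabs_mult. apply Rabs_right. nra. }
  assert (Hgx : g / x * g = (g * g) / x) by (field; lra).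
  assert (Hb1 : (c * Rabs g - c*c*x/4) * x <= g*g) by lra.
  assert (Hb : (c * Rabs g - c * c * x / 4) <= (g * g) / x).
  { apply (Rmult_le_reg_r x); [lra|]. replace (g * g / x * x) with (g*g) by (field; lra). lra. }
  lra.
Qed.

Lemma term_le_sum (f : nat -> R) n :
  (forall i, (i <= n)%nat -> 0 <= f i) -> forall j, (j <= n)%nat -> f j <= sum_f_R0 f n.
Proof.
  induction n; intros H j Hj.
  - simpl. replace j with 0%nat by lia. lra.
  - simpl. destruct (Nat.eq_dec j (S n)) as [->|].
    + assert (0 <= sum_f_R0 f n).
      { pose proof (sum_Rle (fun _ => 0) f n (fun i Hi => H i ltac:(lia))) as H0.
        rewrite sum_cte in H0. lra. } lra.
    + pose proof (IHn (fun i Hi => H i ltac:(lia)) j ltac:(lia)). pose proof (H (S n) (le_n _)). lra.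
Qed.

Lemma w_ge1 d : 1 <= exp (- d) + d.
Proof. pose proof (exp_ineq1_le (- d)). lra. Qed.

Lemma w_bound d Q : exp (- d) + d <= Q -> Rabs d <= 1 + 4 * Q.
Proof.
  intros H. pose proof (w_ge1 d).
  destruct (Rle_dec 0 d).
  - pose proof (exp_pos (- d)). rewrite Rabs_right by lra. lra.
  - assert (E : exp (- d) = exp (- d / 2) * exp (- d / 2)).
    { rewrite <- exp_plus. f_equal. field. }
    pose proof (exp_ineq1_le (- d / 2)).
    assert (exp (- d) >= (1 - d/2) * (1 - d/2)) by (rewrite E; nra).
    rewrite Rabs_left by lra. nra.
Qed.

Lemma gam0 K : gam K 0 = 0.
Proof. unfold gam. simpl. field. Qed.
Lemma gamK K : gam K K = 0.
Proof. unfold gam. field. Qed.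
Lemma gam_pos K j : (1 <= j)%nat -> (j + 1 <= K)%nat -> / 2 <= gam K j.
Proof.
  intros H1 H2. unfold gam.
  assert (1 <= INR j) by (apply (le_INR 1); lia).
  assert (INR j + 1 <= INR K) by (rewrite <- S_INR; apply le_INR; lia). nra.
Qed.

Definition Pf (K:nat) (T:R) (xi: nat->R->R) (s:R) :=
  sum_f_R0 (fun i => gam K (S i) * (exp (-(xi (S (S i)) (Rmax T s) - xi (S i) (Rmax T s)))
     + (xi (S (S i)) (Rmax T s) - xi (S i) (Rmax T s)))) (K-2).

Definition dPf (K:nat) (T:R) (xi xi': nat->R->R) (x:R) :=
  sum_f_R0 (fun i => gam K (S i) * (- exp (-(xi (S (S i)) (Rmax T x) - xi (S i) (Rmax T x)))
     * (xi' (S (S i)) x - xi' (S i) x) + (xi' (S (S i)) x - xi' (S i) x))) (K-2).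

Lemma Pf_deriv K T xi xi' x : (2 <= K)%nat -> T < x ->
  (forall k : nat, (1 <= k <= K)%nat -> C1_on T (xi k) (xi' k)) ->
  derivable_pt_lim (Pf K T xi) x (dPf K T xi xi' x).
Proof.
  intros HK Hx H. unfold Pf, dPf.
  apply (myDsum (fun i s => gam K (S i) * (exp (-(xi (S (S i)) (Rmax T s) - xi (S i) (Rmax T s)))
     + (xi (S (S i)) (Rmax T s) - xi (S i) (Rmax T s))))).
  intros i Hi.
  assert (D1 : derivable_pt_lim (fun s => xi (S (S i)) (Rmax T s)) x (xi' (S (S i)) x)).
  { apply deriv_interior; [lra|]. apply (H (S (S i)) ltac:(lia) x ltac:(lra)). }
  assert (D2 : derivable_pt_lim (fun s => xi (S i) (Rmax T s)) x (xi' (S i) x)).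
  { apply deriv_interior; [lra|]. apply (H (S i) ltac:(lia) x ltac:(lra)). }
  apply myDscal. apply myDplus.
  - apply (myDexpo (fun s => xi (S (S i)) (Rmax T s) - xi (S i) (Rmax T s))). exact (@myDminus _ _ _ _ _ D1 D2).
  - exact (@myDminus _ _ _ _ _ D1 D2).
Qed.

Lemma Pf_cont K T xi xi' x : (2 <= K)%nat -> T <= x ->
  (forall k : nat, (1 <= k <= K)%nat -> C1_on T (xi k) (xi' k)) ->
  continuity_pt (Pf K T xi) x.
Proof.
  intros HK Hx H. unfold Pf.
  apply (myCsum (fun i s => gam K (S i) * (exp (-(xi (S (S i)) (Rmax T s) - xi (S i) (Rmax T s)))
     + (xi (S (S i)) (Rmax T s) - xi (S i) (Rmax T s))))).
  intros i Hi.
  assert (D1 : continuity_pt (fun s => xi (S (S i)) (Rmax T s)) x).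
  { apply (cont_ext T _ x (xi' (S (S i)) x)); [lra|]. apply (H (S (S i)) ltac:(lia) x ltac:(lra)). }
  assert (D2 : continuity_pt (fun s => xi (S i) (Rmax T s)) x).
  { apply (cont_ext T _ x (xi' (S i) x)); [lra|]. apply (H (S i) ltac:(lia) x ltac:(lra)). }
  apply myCscal. apply myCplus.
  - apply (myCexpo (fun s => xi (S (S i)) (Rmax T s) - xi (S i) (Rmax T s))). exact (@myCminus _ _ _ D1 D2).
  - exact (@myCminus _ _ _ D1 D2).
Qed.

Lemma key (K:nat) (x c : R) (a G : nat -> R) : (2 <= K)%nat -> 0 < x -> G 0%nat = 0 -> G K = 0 ->
  (forall k, (1 <= k <= K)%nat -> Rabs (a k - /x * (G k - G (k-1)%nat)) <= c) ->
  sum_f_R0 (fun i => G (S i) * (a (S (S i)) - a (S i))) (K-2) <= INR K * (c * c * x / 4).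
Proof.
  intros HK Hx H0 HKK Ha.
  pose proof (sbp a G (K-2)) as E.
  replace (S (S (K-2))) with K in E by lia.
  rewrite H0, HKK in E.
  assert (E2 : sum_f_R0 (fun i => G (S i) * (a (S (S i)) - a (S i))) (K-2) =
     sum_f_R0 (fun i => a (S i) * (G i - G (S i))) (S (K-2))) by (rewrite E; ring).
  rewrite E2.
  apply Rle_trans with (sum_f_R0 (fun _ => c * c * x / 4) (S (K-2))).
  - apply sum_Rle. intros i Hi. apply term_bound; [exact Hx|].
    specialize (Ha (S i) ltac:(lia)). replace (S i - 1)%nat with i in Ha by lia.
    replace (a (S i) + (G i - G (S i)) / x) with (a (S i) - / x * (G (S i) - G i)) by (field; lra).
    exact Ha.
  - rewrite sum_cte. replace (S (S (K-2))) with K by lia. lra.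
Qed.

Theorem mainTheorem13 (K : nat) (theta T C : R)
  (xi xi' : nat -> R -> R)
  (hK : (2 <= K)%nat) (htheta : 1 < theta) (hT : 0 < T)
  (hC1 : forall k : nat, (1 <= k <= K)%nat -> C1_on T (xi k) (xi' k))
  (h1 : forall t : R, T <= t ->
     Rabs (xi' 1%nat t
           - (- / t * gam K 1 * (exp (- (xi 2%nat t - xi 1%nat t)) - 1)))
       <= C * Rpower t (- theta))
  (hmid : forall k : nat, (2 <= k <= K - 1)%nat -> forall t : R, T <= t ->
     Rabs (xi' k t
           - / t * (gam K (k - 1) * (exp (- (xi k t - xi (k - 1)%nat t)) - 1)
                    - gam K k * (exp (- (xi (k + 1)%nat t - xi k t)) - 1)))
       <= C * Rpower t (- theta))
  (hlast : forall t : R, T <= t ->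
     Rabs (xi' K t
           - / t * gam K (K - 1) * (exp (- (xi K t - xi (K - 1)%nat t)) - 1))
       <= C * Rpower t (- theta))
  (hsum : exists B : R, forall t : R, T <= t ->
     Rabs (sum_f_R0 (fun i => xi (S i) t) (K - 1)) <= B) :
  exists M : R, 0 < M /\
    forall k : nat, (1 <= k <= K)%nat -> forall t : R, T <= t -> Rabs (xi k t) <= M.
Proof.
  destruct hsum as [B hB].
  assert (hall : forall k, (1<=k<=K)%nat -> forall t, T<=t ->
    Rabs (xi' k t - /t * (gam K k * (1 - exp (-(xi (S k) t - xi k t)))
         - gam K (k-1) * (1 - exp (-(xi k t - xi (k-1)%nat t))))) <= C * Rpower t (-theta)).
  { intros k Hk t Ht. destruct (Nat.eq_dec k 1) as [->|Hk1].
    - replace (1-1)%nat with 0%nat by lia. rewrite gam0.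
      eapply Rle_trans; [|apply (h1 t Ht)]. right. f_equal. ring.
    - destruct (Nat.eq_dec k K) as [->|HkK].
      + rewrite gamK. eapply Rle_trans; [|apply (hlast t Ht)]. right. f_equal. ring.
      + pose proof (hmid k ltac:(lia) t Ht) as Hm. rewrite Nat.add_1_r in Hm.
        eapply Rle_trans; [|apply Hm]. right. f_equal. ring. }
  set (e := 2 - 2 * theta).
  set (A := INR K * (C * C) / 4 / (2 * theta - 2)).
  assert (HA : 0 <= A).
  { unfold A. assert (0 <= INR K * (C*C)) by (apply Rmult_le_pos; [apply pos_INR | apply Rle_0_sqr]).
    unfold Rdiv. apply Rmult_le_pos; [apply Rmult_le_pos; lra|].
    left; apply Rinv_0_lt_compat; lra. }
  assert (dneg : forall x, T <= x ->
     dPf K T xi xi' x + A * (e * Rpower x (e - 1)) <= 0).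
  { intros x Hx. unfold dPf. rewrite (Rmax_right T x) by lra.
    set (G := fun k => gam K k * (1 - exp (-(xi (S k) x - xi k x)))).
    set (a := fun k => xi' k x).
    rewrite (sum_eq _ (fun i => G (S i) * (a (S (S i)) - a (S i)))) by (intros; unfold G, a; ring).
    assert (Hh : forall k, (1 <= k <= K)%nat -> Rabs (a k - /x * (G k - G (k-1)%nat)) <= C * Rpower x (-theta)).
    { intros k Hk. unfold a, G. replace (S (k-1)) with k by lia. apply (hall k Hk x Hx). }
    assert (Hkey := key K x (C * Rpower x (-theta)) a G hK ltac:(lra)
      ltac:(unfold G; rewrite gam0; ring) ltac:(unfold G; rewrite gamK; ring) Hh).
    assert (Eq : INR K * (C * Rpower x (- theta) * (C * Rpower x (- theta)) * x / 4)
                 + A * (e * Rpower x (e - 1)) = 0).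
    { unfold e, A. replace (2 - 2 * theta - 1) with (-theta + -theta + 1) by ring.
      rewrite !Rpower_plus, Rpower_1 by lra. field. lra. }
    lra. }
  assert (mono : forall t, T <= t ->
    Pf K T xi t + A * Rpower t e <= Pf K T xi T + A * Rpower T e).
  { intros t Ht. destruct (Req_dec t T) as [->|Htn]; [lra|].
    destruct (MVT_gen (fun s => Pf K T xi s + A * Rpower s e) T t
       (fun x => dPf K T xi xi' x + A * (e * Rpower x (e - 1)))) as [c [Hc Ec]].
    - rewrite Rmin_left, Rmax_right by lra. intros x Hx. apply is_derive_Reals.
      apply myDplus; [apply Pf_deriv; auto; lra|].
      apply myDscal. apply derivable_pt_lim_power. lra.
    - rewrite Rmin_left, Rmax_right by lra. intros x Hx.
      apply myCplus; [apply (Pf_cont K T xi xi'); auto; lra|].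
      apply myCscal. apply derivable_continuous_pt. exists (e * Rpower x (e - 1)).
      apply derivable_pt_lim_power. lra.
    - rewrite Rmin_left in Hc by lra. pose proof (dneg c ltac:(lra)).
      assert (0 <= t - T) by lra.
      assert (0 <= (-(dPf K T xi xi' c + A * (e * Rpower c (e - 1)))) * (t - T))
        by (apply Rmult_le_pos; lra).
      cbv beta in Ec. lra. }
  set (P0 := Pf K T xi T + A * Rpower T e).
  assert (Pbd : forall t, T <= t -> Pf K T xi t <= P0).
  { intros t Ht. pose proof (mono t Ht).
    assert (0 <= A * Rpower t e) by (apply Rmult_le_pos; [exact HA| unfold Rpower; left; apply exp_pos]).
    unfold P0. lra. }
  set (D := 1 + 4 * (2 * P0)).
  assert (Dbd : forall j, (1 <= j <= K - 1)%nat -> forall t, T <= t ->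
     Rabs (xi (S j) t - xi j t) <= D).
  { intros j Hj t Ht. apply w_bound.
    pose proof (Pbd t Ht) as HP. unfold Pf in HP. rewrite (Rmax_right T t) in HP by lra.
    pose proof (term_le_sum (fun i => gam K (S i) * (exp (- (xi (S (S i)) t - xi (S i) t))
      + (xi (S (S i)) t - xi (S i) t))) (K-2)) as HT.
    assert (Hnn : forall i, (i <= K-2)%nat -> 0 <= gam K (S i) * (exp (- (xi (S (S i)) t - xi (S i) t))
      + (xi (S (S i)) t - xi (S i) t))).
    { intros i Hi. apply Rmult_le_pos.
      - pose proof (gam_pos K (S i) ltac:(lia) ltac:(lia)). lra.
      - pose proof (w_ge1 (xi (S (S i)) t - xi (S i) t)). lra. }
    specialize (HT Hnn (j - 1)%nat ltac:(lia)). cbv beta in HT.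
    replace (S (j - 1)) with j in HT by lia.
    pose proof (gam_pos K j ltac:(lia) ltac:(lia)).
    pose proof (w_ge1 (xi (S j) t - xi j t)).
    assert (/2 * (exp (- (xi (S j) t - xi j t)) + (xi (S j) t - xi j t)) <=
       gam K j * (exp (- (xi (S j) t - xi j t)) + (xi (S j) t - xi j t)))
      by (apply Rmult_le_compat_r; lra).
    lra. }
  assert (D0 : 0 <= D).
  { pose proof (Dbd 1%nat ltac:(lia) T ltac:(lra)). pose proof (Rabs_pos (xi 2%nat T - xi 1%nat T)). lra. }
  assert (tel : forall m j, (1 <= j)%nat -> (j + m <= K)%nat -> forall t, T <= t ->
     Rabs (xi (j + m)%nat t - xi j t) <= INR m * D).
  { induction m; intros j Hj Hjm t Ht.
    - rewrite Nat.add_0_r. unfold Rminus. rewrite Rplus_opp_r, Rabs_R0. simpl. lra.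
    - replace (j + S m)%nat with (S (j + m)) by lia.
      pose proof (Rabs_triang (xi (S (j + m)) t - xi (j + m)%nat t) (xi (j + m)%nat t - xi j t)) as Htr.
      replace (xi (S (j + m)) t - xi (j + m)%nat t + (xi (j + m)%nat t - xi j t))
        with (xi (S (j + m)) t - xi j t) in Htr by ring.
      pose proof (Dbd (j + m)%nat ltac:(lia) t Ht). pose proof (IHm j Hj ltac:(lia) t Ht).
      rewrite S_INR. lra. }
  assert (pair : forall j k, (1 <= j <= K)%nat -> (1 <= k <= K)%nat -> forall t, T <= t ->
     Rabs (xi k t - xi j t) <= INR K * D).
  { intros j k Hj Hk t Ht. destruct (Nat.le_gt_cases j k).
    - pose proof (tel (k - j)%nat j ltac:(lia) ltac:(lia) t Ht) as Htl.
      replace (j + (k - j))%nat with k in Htl by lia.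
      assert (INR (k - j) <= INR K) by (apply le_INR; lia).
      assert (INR (k - j) * D <= INR K * D) by (apply Rmult_le_compat_r; lra). lra.
    - pose proof (tel (j - k)%nat k ltac:(lia) ltac:(lia) t Ht) as Htl.
      replace (k + (j - k))%nat with j in Htl by lia. rewrite Rabs_minus_sym.
      assert (INR (j - k) <= INR K) by (apply le_INR; lia).
      assert (INR (j - k) * D <= INR K * D) by (apply Rmult_le_compat_r; lra). lra. }
  assert (K1 : 1 <= INR K) by (apply (le_INR 1); lia).
  exists (Rabs B + INR K * (INR K * D) + 1). split.
  { pose proof (Rabs_pos B). assert (0 <= INR K * (INR K * D)) by (apply Rmult_le_pos; [lra|apply Rmult_le_pos; lra]). lra. }
  intros k Hk t Ht.
  assert (E : INR K * xi k t = sum_f_R0 (fun i => xi (S i) t) (K - 1)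
      + sum_f_R0 (fun i => xi k t - xi (S i) t) (K - 1)).
  { rewrite minus_sum, sum_cte. replace (S (K - 1)) with K by lia. ring. }
  assert (S2 : Rabs (sum_f_R0 (fun i => xi k t - xi (S i) t) (K - 1)) <= INR K * (INR K * D)).
  { eapply Rle_trans; [apply Rsum_abs|].
    eapply Rle_trans; [apply (sum_Rle _ (fun _ => INR K * D))|].
    - intros i Hi. rewrite Rabs_minus_sym. apply pair; [lia|lia|exact Ht].
    - rewrite sum_cte. replace (S (K - 1)) with K by lia. lra. }
  pose proof (hB t Ht).
  pose proof (Rabs_triang (sum_f_R0 (fun i => xi (S i) t) (K - 1)) (sum_f_R0 (fun i => xi k t - xi (S i) t) (K - 1))) as Htr.
  rewrite <- E, Rabs_mult, (Rabs_right (INR K)) in Htr by lra.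
  pose proof (Rabs_pos (xi k t)). pose proof (Rle_abs B).
  assert (Rabs (xi k t) <= INR K * Rabs (xi k t)) by (rewrite <- (Rmult_1_l (Rabs (xi k t))) at 1; apply Rmult_le_compat_r; lra).
  lra.
Qed.
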